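(* Let $B^n$ be the open unit ball of $\mathbb{R}^n$, let $f\colon[0,1)\to[0,\infty)$ with $f(0)=1$, and suppose $\rho_M(x,y)=\dfrac{|x-y|}{f(|x|)f(|y|)}$ is a metric on $B^n$. Then $\rho_M(g(x),g(y))=\rho_M(x,y)$ for all $x,y\in B^n$ and all $g\in GM(B^n)$ if and only if $f(x)=\sqrt{1-x^2}$ for all $x\in[0,1)$.
   Context: $GM(B^n)$ denotes the group of Möbius transformations of $\overline{\mathbb{R}^n}=\mathbb{R}^n\cup\{\infty\}$ mapping $B^n$ onto itself. Convention $0/0=0$. *)

(* Defs.v *)
(* Euclidean space R^n = 'rV[R]_n over R : realType (the real numbers)
The extended space
   \overline{R^n} = R^n \cup {\infty} is modelled as option 'rV[R]_n,
   with None = \infty. *)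
From HB Require Import structures.
From mathcomp Require Import all_boot all_order all_algebra.
From mathcomp Require Import reals.
Set Implicit Arguments. Unset Strict Implicit. Unset Printing Implicit Defensive.
Import Order.TTheory GRing.Theory Num.Theory.
Local Open Scope ring_scope.

Section Defs.
Variables (R : realType) (n : nat).

Definition pt := 'rV[R]_n.
Definition ext := option pt.

Definition dotv (x y : pt) : R := \sum_(i < n) x 0 i * y 0 i.
Definition enorm (x : pt) : R := Num.sqrt (dotv x x).

Definition in_ball (x : pt) : Prop := enorm x < 1.

Definition hyp_refl (a : pt) (t : R) (z : ext) : ext :=
  match z with
  | None => None
  | Some x => Some (x - ((2 * (dotv x a - t)) / dotv a a) *: a)
  end.

Definition sph_refl (a : pt) (r : R) (z : ext) : ext :=
  match z with
  | None => Some a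
  | Some x => if x == a then None
              else Some (a + (r ^+ 2 / dotv (x - a) (x - a)) *: (x - a))
  end.

Definition is_reflection (s : ext -> ext) : Prop :=
  (exists a t, a != 0 /\ s = hyp_refl a t) \/
  (exists a r, 0 < r /\ s = sph_refl a r).

Inductive is_mobius : (ext -> ext) -> Prop :=
  | mob_id : is_mobius id
  | mob_comp s g : is_reflection s -> is_mobius g -> is_mobius (s \o g).

Definition GM_ball (g : ext -> ext) : Prop :=
  is_mobius g /\
  (forall x, in_ball x -> exists y, g (Some x) = Some y /\ in_ball y) /\
  (forall y, in_ball y -> exists x, in_ball x /\ g (Some x) = Some y).

(* rho_M(x,y) = |x-y| / (f(|x|) f(|y|)); in MathComp u / 0 = 0, which
   agrees with the convention 0/0 = 0. *)
Definition rhoM (f : R -> R) (x y : pt) : R :=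
  enorm (x - y) / (f (enorm x) * f (enorm y)).

Definition metric_on_ball (d : pt -> pt -> R) : Prop :=
  (forall x y, in_ball x -> in_ball y -> 0 <= d x y) /\
  (forall x y, in_ball x -> in_ball y -> (d x y = 0 <-> x = y)) /\
  (forall x y, in_ball x -> in_ball y -> d x y = d y x) /\
  (forall x y z, in_ball x -> in_ball y -> in_ball z ->
     d x z <= d x y + d y z).

End Defs.

(* Main.v *)
Require Import Defs.
From HB Require Import structures.
From mathcomp Require Import all_boot all_order all_algebra.
From mathcomp Require Import reals ring lra.
Import Order.TTheory GRing.Theory Num.Theory.
Local Open Scope ring_scope.
Set Implicit Arguments. Unset Strict Implicit. Unset Printing Implicit Defensive.

Section Aux.
Variables (R : realType) (n : nat).
Implicit Types (x y z a : pt R n).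

Lemma dotvC x y : dotv x y = dotv y x.
Proof. by apply: eq_bigr => i _; rewrite mulrC. Qed.
Lemma dotvDl x y z : dotv (x + y) z = dotv x z + dotv y z.
Proof. by rewrite /dotv -big_split; apply: eq_bigr => i _; rewrite mxE mulrDl. Qed.
Lemma dotvZl (k : R) x z : dotv (k *: x) z = k * dotv x z.
Proof. by rewrite /dotv mulr_sumr; apply: eq_bigr => i _; rewrite mxE mulrA. Qed.
Lemma dotvNl x z : dotv (- x) z = - dotv x z.
Proof. by rewrite -scaleN1r dotvZl mulN1r. Qed.
Lemma dotvBl x y z : dotv (x - y) z = dotv x z - dotv y z.
Proof. by rewrite dotvDl dotvNl. Qed.
Lemma dotvDr x y z : dotv z (x + y) = dotv z x + dotv z y.
Proof. by rewrite dotvC dotvDl !(dotvC z). Qed.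
Lemma dotvZr (k : R) x z : dotv z (k *: x) = k * dotv z x.
Proof. by rewrite dotvC dotvZl dotvC. Qed.
Lemma dotvNr x z : dotv z (- x) = - dotv z x.
Proof. by rewrite dotvC dotvNl dotvC. Qed.
Lemma dotvBr x y z : dotv z (x - y) = dotv z x - dotv z y.
Proof. by rewrite dotvDr dotvNr. Qed.
Lemma dotv0l z : dotv 0 z = 0.
Proof. by rewrite /dotv big1 // => i _; rewrite mxE mul0r. Qed.
Lemma dotv0r z : dotv z 0 = 0.
Proof. by rewrite dotvC dotv0l. Qed.
Lemma dotv_ge0 x : 0 <= dotv x x.
Proof. by apply: sumr_ge0 => i _; rewrite -expr2 sqr_ge0. Qed.
Lemma dotv_eq0 x : dotv x x = 0 -> x = 0.
Proof.
move=> h; apply/rowP => i; rewrite mxE.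
have : x 0 i * x 0 i = 0.
  move/eqP: h; rewrite /dotv psumr_eq0 => [/allP H|j _]; last by rewrite -expr2 sqr_ge0.
  by apply/eqP; apply: H; rewrite mem_index_enum.
by move/eqP; rewrite mulf_eq0 orbb => /eqP.
Qed.
Lemma enorm2 x : enorm x ^+ 2 = dotv x x.
Proof. by rewrite /enorm sqr_sqrtr // dotv_ge0. Qed.
Lemma in_ballE x : in_ball x <-> dotv x x < 1.
Proof.
rewrite /in_ball /enorm; split => h.
  have hs := sqrtr_ge0 (dotv x x).
  by rewrite -(sqr_sqrtr (dotv_ge0 x)) expr2; nra.
by rewrite -sqrtr1 ltr_sqrt //; lra.
Qed.

Record lv := LV { lv1 : pt R n; lv2 : R; lv3 : R }.
Definition lform (X Y : lv) := dotv (lv1 X) (lv1 Y) + lv2 X * lv2 Y - lv3 X * lv3 Y.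
Definition ladd (X Y : lv) := LV (lv1 X + lv1 Y) (lv2 X + lv2 Y) (lv3 X + lv3 Y).
Definition lscale (k : R) (X : lv) := LV (k *: lv1 X) (k * lv2 X) (k * lv3 X).
Definition lrefl (S X : lv) := ladd X (lscale (- (2 * lform X S / lform S S)) S).

Lemma lformC X Y : lform X Y = lform Y X.
Proof. by rewrite /lform dotvC (mulrC (lv2 X)) (mulrC (lv3 X)). Qed.
Lemma lformDl X Y Z : lform (ladd X Y) Z = lform X Z + lform Y Z.
Proof. rewrite /lform /= dotvDl; ring. Qed.
Lemma lformZl k X Z : lform (lscale k X) Z = k * lform X Z.
Proof. rewrite /lform /= dotvZl; ring. Qed.
Lemma lformDr X Y Z : lform Z (ladd X Y) = lform Z X + lform Z Y.
Proof. by rewrite lformC lformDl !(lformC Z). Qed.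
Lemma lformZr k X Z : lform Z (lscale k X) = k * lform Z X.
Proof. by rewrite lformC lformZl lformC. Qed.

Lemma lrefl_iso S X Y : lform S S != 0 -> lform (lrefl S X) (lrefl S Y) = lform X Y.
Proof.
move=> hS; rewrite /lrefl !(lformDl, lformDr, lformZl, lformZr).
rewrite ?(lformC S X) ?(lformC S Y) ?(lformC Y X).
by field.
Qed.
Lemma lrefl_adj S X Y : lform (lrefl S X) Y = lform X (lrefl S Y).
Proof.
rewrite /lrefl !(lformDl, lformDr, lformZl, lformZr).
rewrite ?(lformC S X) ?(lformC Y S) ?(lformC Y X); ring.
Qed.
Lemma lscaleE k X : lscale k X = LV (k *: lv1 X) (k * lv2 X) (k * lv3 X).
Proof. by []. Qed.
Lemma lscale1 X : lscale 1 X = X.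
Proof. by case: X => v p q; rewrite /lscale /= scale1r !mul1r. Qed.
Lemma lscaleM k l X : lscale k (lscale l X) = lscale (k * l) X.
Proof. by case: X => v p q; rewrite /lscale /= scalerA !mulrA. Qed.
Lemma lrefl_scale S k X : lrefl S (lscale k X) = lscale k (lrefl S X).
Proof.
case: X => v p q; case: S => a b c; rewrite /lrefl /ladd /lscale /lform /= dotvZl.
congr LV; last 2 first.
- ring.
- ring.
apply/rowP => i; rewrite !mxE; ring.
Qed.
Lemma lrefl_invol S X : lform S S != 0 -> lrefl S (lrefl S X) = X.
Proof.
move=> hS; case: X => v p q; move: hS; case: S => a b c.
rewrite /lrefl /ladd /lscale /lform /= !(dotvDl, dotvZl) => hS.
congr LV; last 2 first.
- by field.
- by field.
apply/rowP => i; rewrite !mxE; field => //.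
Qed.

Definition emb (z : ext R n) : lv :=
  match z with
  | None => LV 0 1 1
  | Some x => LV x ((dotv x x - 1) / 2) ((dotv x x + 1) / 2)
  end.
Definition lE : lv := LV 0 1 0.

Lemma lform_emb x y : lform (emb (Some x)) (emb (Some y)) = - dotv (x - y) (x - y) / 2.
Proof. rewrite /lform /= !(dotvBl, dotvBr) (dotvC y x); by field. Qed.
Lemma lform_embN x : lform (emb (Some x)) (emb None) = -1.
Proof. rewrite /lform /= dotv0r; by field. Qed.
Lemma lform_embNN : lform (emb None) (emb None) = 0.
Proof. rewrite /lform /= dotv0r; ring. Qed.
Lemma lform_emb_null (z : ext R n) : lform (emb z) (emb z) = 0.
Proof. case: z => [x|]; last exact: lform_embNN. by rewrite lform_emb subrr dotv0l; ring. Qed.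
Lemma lform_embE (z : ext R n) : lform (emb z) lE = if z is Some x then (dotv x x - 1) / 2 else 1.
Proof. case: z => [x|]; rewrite /lform /= dotv0r; ring. Qed.

Lemma emb_inj (z zp : ext R n) : lform (emb z) (emb zp) = 0 -> z = zp.
Proof.
case: z => [x|]; case: zp => [y|] //.
- rewrite lform_emb => h; have : dotv (x - y) (x - y) = 0 by lra.
  by move/dotv_eq0/eqP; rewrite subr_eq0 => /eqP ->.
- by rewrite lform_embN => /eqP; rewrite oppr_eq0 oner_eq0.
- by rewrite lformC lform_embN => /eqP; rewrite oppr_eq0 oner_eq0.
Qed.

Lemma emb_scale_inj y k (z : ext R n) : emb (Some y) = lscale k (emb z) -> z = Some y.
Proof.
case: z => [x|] /= [h1 h2 h3].
  have hk : k = 1 by lra.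
  by move: h1; rewrite hk scale1r => ->.
clear h1; exfalso; lra.
Qed.

Lemma dotv_gt0 x : x != 0 -> 0 < dotv x x.
Proof.
move=> hx; rewrite lt_def dotv_ge0 andbT; apply/eqP => /dotv_eq0 h.
by rewrite h eqxx in hx.
Qed.

Ltac dexp := rewrite ?(dotvDl, dotvDr, dotvBl, dotvBr, dotvZl, dotvZr, dotvNl, dotvNr, dotv0l, dotv0r).

Lemma hyp_lorentz a t (z : ext R n) : a != 0 ->
  lrefl (LV a t t) (emb z) = emb (hyp_refl a t z).
Proof.
move=> /dotv_gt0 ha; have ha' : dotv a a != 0 by rewrite gt_eqF.
case: z => [x|]; rewrite /lrefl /ladd /lscale /lform /=; dexp;
  have -> : dotv a a + t * t - t * t = dotv a a by ring.
  rewrite (dotvC a x); congr LV.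
  - by apply/rowP => i; rewrite !mxE; field.
  - by field.
  - by field.
congr LV.
- by apply/rowP => i; rewrite !mxE; field.
- by field.
- by field.
Qed.

Definition sphS a (r : R) := LV a ((dotv a a - r ^+ 2 - 1) / 2) ((dotv a a - r ^+ 2 + 1) / 2).

Lemma sphS_norm a r : lform (sphS a r) (sphS a r) = r ^+ 2.
Proof. rewrite /lform /=; by field. Qed.

Lemma sph_lorentz a r (z : ext R n) : 0 < r ->
  exists k, 0 < k /\ lrefl (sphS a r) (emb z) = lscale k (emb (sph_refl a r z)).
Proof.
move=> hr; have hr2 : r ^+ 2 != 0 by rewrite expf_neq0 // gt_eqF.
have hr0 : r != 0 by rewrite gt_eqF.
case: z => [x|] /=; last first.
  exists (2 / r ^+ 2); split; first by rewrite divr_gt0 // exprn_gt0.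
  rewrite /lrefl sphS_norm /ladd /lscale /lform /=; dexp.
  congr LV.
  - by apply/rowP => i; rewrite !mxE; field.
  - by field.
  - by field.
case: eqP => [->|/eqP hxa].
  exists (r ^+ 2 / 2); split; first by rewrite divr_gt0 // exprn_gt0.
  rewrite /lrefl sphS_norm /ladd /lscale /lform /=; dexp.
  congr LV.
  - by apply/rowP => i; rewrite !mxE; field.
  - by field.
  - by field.
have hD : 0 < dotv (x - a) (x - a) by apply: dotv_gt0; rewrite subr_eq0.
exists (dotv (x - a) (x - a) / r ^+ 2); split; first by rewrite divr_gt0 // exprn_gt0.
move: hD; rewrite /lrefl sphS_norm /ladd /lscale /lform /=; dexp.
rewrite (dotvC a x) => hD.
have hD' : dotv x x - dotv x a + (- dotv x a - - dotv a a) != 0 by rewrite gt_eqF.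
congr LV.
- by apply/rowP => i; rewrite !mxE; field; rewrite hD' hr0.
- by field; rewrite hD' hr0.
- by field; rewrite hD' hr0.
Qed.


Lemma refl_lorentz (s : ext R n -> ext R n) : is_reflection s ->
  exists S, lform S S != 0 /\
    forall (z : ext R n), exists k, 0 < k /\ lrefl S (emb z) = lscale k (emb (s z)).
Proof.
case=> [[a [t [ha ->]]]|[a [r [hr ->]]]].
  exists (LV a t t); split.
    by rewrite /lform /= addrK gt_eqF // dotv_gt0.
  by move=> z; exists 1; split => //; rewrite lscale1 hyp_lorentz.
exists (sphS a r); split; first by rewrite sphS_norm expf_neq0 // gt_eqF.
by move=> z; apply: sph_lorentz.
Qed.

Lemma mobius_lorentz (g : ext R n -> ext R n) : is_mobius g ->
  exists L L' : lv -> lv,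
    (forall X Y, lform (L X) (L Y) = lform X Y) /\
    (forall X Y, lform (L' X) (L' Y) = lform X Y) /\
    (forall X Y, lform (L X) Y = lform X (L' Y)) /\
    (forall (z : ext R n), exists k, 0 < k /\ L (emb z) = lscale k (emb (g z))).
Proof.
elim=> [|s h hs _ [L [L' [h1 [h2 [h3 h4]]]]]].
  exists id, id; split; first by []. split; first by []. split; first by [].
  by move=> z; exists 1; split => //; rewrite lscale1.
have [S [hS hS2]] := refl_lorentz hs.
exists (fun X => lrefl S (L X)), (fun X => L' (lrefl S X)); split; last split; last split.
- by move=> X Y; rewrite lrefl_iso.
- by move=> X Y; rewrite h2 lrefl_iso.
- by move=> X Y; rewrite lrefl_adj h3.
move=> z; have [k [hk ->]] := h4 z; have [k' [hk' e]] := hS2 (h z).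
exists (k * k'); split; first by rewrite mulr_gt0.
by rewrite lrefl_scale e lscaleM.
Qed.

Lemma lim0_core (P : R -> R) (a b c A B : R) : 0 <= A -> 0 <= B -> 0 < c ->
  (forall e, 0 < e < 1 -> - A * e <= a * e ^+ 2) ->
  (forall e, 0 < e -> - B * e <= b * e) ->
  (forall e, P e = a * e ^+ 2 + b * e + c) ->
  (forall e, 0 < e < 1 -> P e <= 0) -> False.
Proof.
move=> hA hB hc ha hb hP H.
have hMc : 0 < 2 * (A + B + c) by lra.
have he0 : 0 < c / (2 * (A + B + c)) by rewrite divr_gt0.
have he1 : c / (2 * (A + B + c)) <= 1 / 2.
  by rewrite ler_pdivrMr //; lra.
have hMe : (A + B) * (c / (2 * (A + B + c))) <= c / 2.
  rewrite mulrA ler_pdivrMr //; nra.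
move: he0 he1 hMe; generalize (c / (2 * (A + B + c))) => e he0 he1 hMe.
have he : 0 < e < 1 by apply/andP; split; lra.
have := H e he; rewrite hP.
have := ha e he; have := hb e he0; nra.
Qed.

Lemma lim0 (P : R -> R) (a b c : R) : (forall e, P e = a * e ^+ 2 + b * e + c) ->
  (forall e, 0 < e < 1 -> P e <= 0) -> c <= 0.
Proof.
move=> hP H; rewrite leNgt; apply/negP => hc.
have ha : forall e, 0 < e < 1 -> - `|a| * e <= a * e ^+ 2.
  move=> e /andP [he0 he1].
  have : `|a * e ^+ 2| <= `|a| * e.
    rewrite normrM [`|e ^+ 2|]ger0_norm; last by rewrite exprn_ge0 // ltW.
    rewrite expr2.
    have h1 : 0 <= e * (1 - e) by apply: mulr_ge0; lra.
    have := normr_ge0 a; nra.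
  by rewrite ler_norml mulNr => /andP [].
have hb : forall e, 0 < e -> - `|b| * e <= b * e.
  move=> e he.
  have : `|b * e| <= `|b| * e by rewrite normrM (ger0_norm (ltW he)).
  by rewrite ler_norml mulNr => /andP [].
exact: (lim0_core (normr_ge0 a) (normr_ge0 b) hc ha hb hP H).
Qed.


Definition ev (i : 'I_n) : pt R n := delta_mx 0 i.
Lemma dotv_ev i w : dotv (ev i) w = w 0 i.
Proof.
rewrite /dotv (bigD1 i) //= big1 ?addr0 => [|j hj]; rewrite !mxE ?eqxx /=.
  by rewrite mul1r.
by rewrite (negbTE hj) mul0r.
Qed.
Lemma dotv_evv i : dotv (ev i) (ev i) = 1.
Proof. by rewrite dotv_ev mxE !eqxx. Qed.
Lemma dotv_sev (h : R) i : dotv (h *: ev i) (h *: ev i) = h ^+ 2.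
Proof. by rewrite dotvZl dotvZr dotv_evv mulr1 expr2. Qed.

Lemma psi_lemma (W : lv) : (0 < n)%N -> lform W W = 1 ->
  (forall x, in_ball x -> lform (emb (Some x)) W < 0) ->
  (forall x, 1 < dotv x x -> 0 <= lform (emb (Some x)) W) ->
  forall x, lform (emb (Some x)) W = (dotv x x - 1) / 2.
Proof.
case: W => w al be hn hWW hneg hpos.
have hq : forall (h : R) i, lform (emb (Some (h *: ev i))) (LV w al be) =
    h * w 0 i + (h ^+ 2 - 1) / 2 * al - (h ^+ 2 + 1) / 2 * be.
  by move=> h i; rewrite /lform /= dotv_sev dotvZl dotv_ev.
have hb : forall (h : R) i, h ^+ 2 < 1 -> in_ball (h *: ev i).
  by move=> h i hh; rewrite in_ballE dotv_sev.
have key : forall i, w 0 i = 0 /\ be = 0.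
  move=> i.
  have c1 : w 0 i - be <= 0.
    apply: (@lim0 (fun e => lform (emb (Some ((1 - e) *: ev i))) (LV w al be))
              ((al - be) / 2) (- w 0 i - al + be)).
      by move=> e /=; rewrite hq; field.
    move=> e /andP [he0 he1]; apply/ltW/hneg/hb; nra.
  have c2 : - (w 0 i - be) <= 0.
    apply: (@lim0 (fun e => - lform (emb (Some ((1 + e) *: ev i))) (LV w al be))
              (- ((al - be) / 2)) (- (w 0 i + al - be))).
      by move=> e /=; rewrite hq; field.
    move=> e /andP [he0 he1]; rewrite oppr_le0; apply/hpos; rewrite dotv_sev; nra.
  have c3 : - w 0 i - be <= 0.
    apply: (@lim0 (fun e => lform (emb (Some ((-1 + e) *: ev i))) (LV w al be))
              ((al - be) / 2) (w 0 i - al + be)).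
      by move=> e /=; rewrite hq; field.
    move=> e /andP [he0 he1]; apply/ltW/hneg/hb; nra.
  have c4 : - (- w 0 i - be) <= 0.
    apply: (@lim0 (fun e => - lform (emb (Some ((-1 - e) *: ev i))) (LV w al be))
              (- ((al - be) / 2)) (- (- w 0 i + al - be))).
      by move=> e /=; rewrite hq; field.
    move=> e /andP [he0 he1]; rewrite oppr_le0; apply/hpos; rewrite dotv_sev; nra.
  split; lra.
have hw : w = 0 by apply/rowP => i; rewrite mxE; case: (key i).
have hbe : be = 0 by case: (key (Ordinal hn)).
move: hWW; rewrite /lform /= hw hbe dotv0l => hal.
have := hneg 0; rewrite in_ballE dotv0l => /(_ ltr01).
rewrite /lform /= hw hbe dotv0l => hal0.
have hal1 : al = 1 by nra.
by move=> x; rewrite /lform /= hal1 dotv0r; field.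
Qed.


Lemma GM_scal (g : ext R n -> ext R n) : (0 < n)%N -> GM_ball g ->
  forall x y x' y', in_ball x -> in_ball y ->
  g (Some x) = Some x' -> g (Some y) = Some y' ->
  exists kx ky, [/\ 0 < kx, 0 < ky, kx * (dotv x' x' - 1) = dotv x x - 1,
    ky * (dotv y' y' - 1) = dotv y y - 1 &
    kx * ky * dotv (x' - y') (x' - y') = dotv (x - y) (x - y)].
Proof.
move=> hn [hm [hin hsurj]].
have [L [L' [h1 [h2 [h3 h4]]]]] := mobius_lorentz hm.
have hW : forall (z : ext R n), exists k, 0 < k /\ k * lform (emb (g z)) lE = lform (emb z) (L' lE).
  by move=> z; have [k [hk e]] := h4 z; exists k; split => //; rewrite -h3 e lformZl.
have hinj : forall (z z' : ext R n), g z = g z' -> z = z'.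
  move=> z z' e; apply: emb_inj; have [k [_ ek]] := h4 z; have [k' [_ ek']] := h4 z'.
  by rewrite -h1 ek ek' lformZl lformZr e lform_emb_null !mulr0.
have hpsi := @psi_lemma (L' lE) hn.
have hWW : lform (L' lE) (L' lE) = 1 by rewrite h2 /lform /= dotv0l; ring.
have hneg : forall x, in_ball x -> lform (emb (Some x)) (L' lE) < 0.
  move=> x hx; have [y [ey hy]] := hin x hx; have [k [hk ek]] := hW (Some x).
  rewrite -ek ey lform_embE; move/in_ballE: hy => hy.
  nra.
have hpos : forall x, 1 < dotv x x -> 0 <= lform (emb (Some x)) (L' lE).
  move=> x hx; have [k [hk ek]] := hW (Some x); rewrite -ek.
  case E: (g (Some x)) => [y|]; rewrite lform_embE; last by rewrite mulr1 ltW.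
  have hy : 1 <= dotv y y.
    rewrite leNgt; apply/negP => hy.
    have [x0 [hx0 e0]] := hsurj y (proj2 (in_ballE y) hy).
    have : g (Some x) = g (Some x0) by rewrite E e0.
    move/hinj => [ex0]; move/in_ballE: hx0; rewrite -ex0; lra.
  nra.
have hps := hpsi hWW hneg hpos.
move=> x y x' y' hx hy gx gy.
have [kx [hkx ex]] := h4 (Some x); have [ky [hky ey]] := h4 (Some y).
rewrite gx in ex; rewrite gy in ey.
exists kx, ky; split => //.
- have := h3 (emb (Some x)) lE; rewrite ex lformZl hps lform_embE => H.
  have -> : dotv x x - 1 = 2 * ((dotv x x - 1) / 2) by field.
  by rewrite -H; field.
- have := h3 (emb (Some y)) lE; rewrite ey lformZl hps lform_embE => H.
  have -> : dotv y y - 1 = 2 * ((dotv y y - 1) / 2) by field.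
  by rewrite -H; field.
have := h1 (emb (Some x)) (emb (Some y)); rewrite ex ey lformZl lformZr !lform_emb => H.
have -> : dotv (x - y) (x - y) = -2 * (- dotv (x - y) (x - y) / 2) by field.
by rewrite -H; field.
Qed.


Lemma lreflE_orth S X : lform X S = 0 -> lrefl S X = X.
Proof.
case: X => v p q h; rewrite /lrefl h mulr0 mul0r oppr0 /ladd /lscale /=.
by rewrite scale0r !mul0r addr0 !addr0.
Qed.

Lemma sph_ball c r : r ^+ 2 = dotv c c - 1 -> 0 < r ->
  forall x, in_ball x -> exists y, sph_refl c r (Some x) = Some y /\ in_ball y.
Proof.
move=> hr2 hr x /in_ballE hx.
have [k [hk e]] := sph_lorentz c (Some x) hr.
have hE : lrefl (sphS c r) lE = lE.
  by apply: lreflE_orth; rewrite /lform /= dotv0l hr2; field.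
have := lrefl_adj (sphS c r) (emb (Some x)) lE.
rewrite hE e lformZl !lform_embE.
case: (sph_refl c r (Some x)) => [y|] H; last by nra.
by exists y; split => //; apply/in_ballE; nra.
Qed.

Lemma sph_invol c r x y : 0 < r -> sph_refl c r (Some x) = Some y ->
  sph_refl c r (Some y) = Some x.
Proof.
move=> hr hxy.
have [k [hk e]] := sph_lorentz c (Some x) hr.
have [k' [hk' e']] := sph_lorentz c (Some y) hr.
have hS : lform (sphS c r) (sphS c r) != 0 by rewrite sphS_norm expf_neq0 // gt_eqF.
apply: (@emb_scale_inj _ (k * k')).
rewrite -lscaleM -e' -lrefl_scale -hxy -e lrefl_invol //.
Qed.

Lemma sph_GM c r : r ^+ 2 = dotv c c - 1 -> 0 < r -> @GM_ball R n (sph_refl c r \o id).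
Proof.
move=> hr2 hr; split; last split.
- apply: mob_comp; last exact: mob_id.
  by right; exists c, r.
- exact: sph_ball.
move=> y hy; have [x [ex hx]] := sph_ball hr2 hr hy.
by exists x; split => //=; apply: sph_invol.
Qed.

Lemma enorm_sev (a : R) i : enorm (a *: ev i) = `|a|.
Proof. by rewrite /enorm dotv_sev sqrtr_sqr. Qed.


Lemma partA (f : R -> R) : (0 < n)%N -> f 0 = 1 -> metric_on_ball (rhoM (n := n) f) ->
  (forall g : ext R n -> ext R n, GM_ball g ->
      forall x y x' y' : pt R n, in_ball x -> in_ball y ->
        g (Some x) = Some x' -> g (Some y) = Some y' ->
        rhoM f x' y' = rhoM f x y) ->
  forall s, 0 < s < 1 -> f (2 * s / (1 + s ^+ 2)) = (1 - s ^+ 2) / (1 + s ^+ 2).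
Proof.
move=> hn hf0 [_ [hm _]] hinv s /andP [hs0 hs1].
pose i0 := Ordinal hn; pose e := ev i0.
have hs : s != 0 by rewrite gt_eqF.
have hsi : 1 < s^-1 by rewrite invf_gt1 //; apply/andP.
pose c := s^-1 *: e.
pose r := Num.sqrt (s^-2 - 1).
have hinv2 : 1 < s ^- 2.
  by rewrite invf_gt1 ?exprn_gt0 // expr2; nra.
have hr2 : r ^+ 2 = s^-2 - 1.
  by rewrite sqr_sqrtr // subr_ge0 ltW.
have hr : 0 < r.
  by rewrite sqrtr_gt0 subr_gt0.
have hc : r ^+ 2 = dotv c c - 1 by rewrite dotv_sev hr2 exprVn.
have hline : forall k, k != s^-1 ->
    sph_refl c r (Some (k *: e)) = Some ((s^-1 + r ^+ 2 / (k - s^-1)) *: e).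
  move=> k hk; rewrite /sph_refl; case: eqP => [h|_].
    have := congr1 (fun m : pt R n => m 0 i0) h.
    by rewrite /= !mxE eqxx !mulr1 => hh; rewrite hh eqxx in hk.
  have hk' : k - s^-1 != 0 by rewrite subr_eq0.
  congr Some; rewrite /c -scalerBl dotv_sev.
  have hks : k * s - 1 != 0.
    have -> : k * s - 1 = (k - s^-1) * s by field.
    by rewrite mulf_neq0.
  by apply/rowP => j; rewrite !mxE; field; rewrite hs hks.
have hGM := sph_GM hc hr.
have e1 : ((-s) : R) != s^-1 by apply/eqP => h; move: hs0 hsi; rewrite -h; lra.
have e0 : (0 : R) != s^-1 by apply/eqP => h; move: hsi; rewrite -h; lra.
have hx : in_ball ((-s) *: e) by rewrite in_ballE dotv_sev; nra.
have hy : in_ball (0 *: e) by rewrite in_ballE dotv_sev; nra.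
have := hinv _ hGM _ _ _ _ hx hy (hline _ e1) (hline _ e0).
have -> : s^-1 + r ^+ 2 / (0 - s^-1) = s by rewrite hr2; field.
have -> : s^-1 + r ^+ 2 / (-s - s^-1) = 2 * s / (1 + s ^+ 2).
  rewrite hr2; field.
  have h1 : 0 < 1 + s ^+ 2 by rewrite expr2; nra.
  have h2 : - s * s - 1 < 0 by nra.
  by rewrite (gt_eqF h1) hs (lt_eqF h2).
have ht : s < 2 * s / (1 + s ^+ 2).
  by rewrite ltr_pdivlMr ?expr2; nra.
move: ht; set t := 2 * s / (1 + s ^+ 2) => ht.
have hts : 0 < t - s by rewrite subr_gt0.
have ht0 : 0 < t by lra.
rewrite /rhoM -!scalerBl !enorm_sev subr0 normrN (gtr0_norm hts) (gtr0_norm ht0) (gtr0_norm hs0).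
rewrite normr0 hf0 mulr1 => H.
have hsb : in_ball (s *: e) by rewrite in_ballE dotv_sev; nra.
have hfs : f s != 0.
  apply/eqP => h0; have := (hm (s *: e) (0 *: e) hsb hy).1.
  rewrite /rhoM -scalerBl !enorm_sev subr0 (gtr0_norm hs0) h0 mul0r invr0 mulr0 => /(_ erefl).
  move/(congr1 (fun m : pt R n => m 0 i0)); rewrite /= !mxE eqxx /= !mulr1 => h.
  by move: hs; rewrite h eqxx.
have hft : f t != 0.
  apply/eqP => h0; move: H; rewrite h0 mul0r invr0 mulr0 => /esym/eqP.
  by rewrite mulf_eq0 invr_eq0 (negbTE hs) (negbTE hfs).
have E : t - s = s / f s * (f t * f s) by rewrite -H divfK // mulf_neq0.
have -> : f t = (t - s) / s by rewrite E; field; rewrite hs hfs.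
rewrite /t; field.
have h1 : 0 < 1 + s ^+ 2 by rewrite expr2; nra.
by rewrite (gt_eqF h1) hs.
Qed.


Lemma sq_inv (D P Q kx ky : R) : 0 <= D -> 0 < P -> 0 < Q -> 0 < kx -> 0 < ky ->
  Num.sqrt (D / (kx * ky)) / (Num.sqrt (P / kx) * Num.sqrt (Q / ky)) =
  Num.sqrt D / (Num.sqrt P * Num.sqrt Q).
Proof.
move=> hD hP hQ hx hy.
rewrite invfM (sqrtrM _ hD) (sqrtrM _ (ltW hP)) (sqrtrM _ (ltW hQ)).
have hkx : 0 <= kx^-1 by rewrite invr_ge0 ltW.
rewrite (sqrtrM _ hkx).
have h1 : Num.sqrt kx^-1 != 0 by rewrite gt_eqF // sqrtr_gt0 invr_gt0.
have h2 : Num.sqrt ky^-1 != 0 by rewrite gt_eqF // sqrtr_gt0 invr_gt0.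
have h3 : Num.sqrt P != 0 by rewrite gt_eqF // sqrtr_gt0.
have h4 : Num.sqrt Q != 0 by rewrite gt_eqF // sqrtr_gt0.

by field; rewrite h1 h2 h3 h4.
Qed.

Lemma partB (f : R -> R) : (0 < n)%N ->
  (forall t : R, 0 <= t < 1 -> f t = Num.sqrt (1 - t ^+ 2)) ->
  (forall g : ext R n -> ext R n, GM_ball g ->
      forall x y x' y' : pt R n, in_ball x -> in_ball y ->
        g (Some x) = Some x' -> g (Some y) = Some y' ->
        rhoM f x' y' = rhoM f x y).
Proof.
move=> hn hf g hg x y x' y' hx hy gx gy.
have [kx [ky [hkx hky ex ey ed]]] := GM_scal hn hg hx hy gx gy.
have hfx : forall z, in_ball z -> f (enorm z) = Num.sqrt (1 - dotv z z).
  by move=> z hz; rewrite hf ?enorm2 // sqrtr_ge0.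
move/in_ballE: (hx) => hx2; move/in_ballE: (hy) => hy2.
have hx' : in_ball x' by apply/in_ballE; nra.
have hy' : in_ball y' by apply/in_ballE; nra.
rewrite /rhoM !hfx // /enorm.
have -> : dotv (x' - y') (x' - y') = dotv (x - y) (x - y) / (kx * ky).
  by rewrite -ed; field; rewrite !gt_eqF.
have -> : 1 - dotv x' x' = (1 - dotv x x) / kx.
  have -> : 1 - dotv x x = - (dotv x x - 1) by ring.
  by rewrite -ex; field; rewrite gt_eqF.
have -> : 1 - dotv y' y' = (1 - dotv y y) / ky.
  have -> : 1 - dotv y y = - (dotv y y - 1) by ring.
  by rewrite -ey; field; rewrite gt_eqF.
by rewrite sq_inv ?dotv_ge0 // subr_gt0.
Qed.

End Aux.

Theorem lemma6p2 (R : realType) (n : nat) (f : R -> R) :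
  (0 < n)%N ->
  (forall t : R, 0 <= t < 1 -> 0 <= f t) ->
  f 0 = 1 ->
  metric_on_ball (rhoM (n := n) f) ->
  ((forall g : ext R n -> ext R n, GM_ball g ->
      forall x y x' y' : pt R n, in_ball x -> in_ball y ->
        g (Some x) = Some x' -> g (Some y) = Some y' ->
        rhoM f x' y' = rhoM f x y)
   <-> (forall t : R, 0 <= t < 1 -> f t = Num.sqrt (1 - t ^+ 2))).
Proof.
move=> hn _ hf0 hm; split; last exact: partB.
move=> hinv t /andP [ht0 ht1].
have [->|htne] := eqVneq t 0; first by rewrite hf0 expr0n /= subr0 sqrtr1.
have htp : 0 < t by rewrite lt_def htne.
pose c := Num.sqrt (1 - t ^+ 2).
have hc2 : c ^+ 2 = 1 - t ^+ 2 by rewrite sqr_sqrtr // subr_ge0 expr2; nra.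
have hc0 : 0 <= c by rewrite sqrtr_ge0.
pose s := t / (1 + c).
have h1c : 0 < 1 + c by lra.
have hs : 0 < s < 1.
  apply/andP; split; first by rewrite divr_gt0.
  by rewrite ltr_pdivrMr //; lra.
have hc' : 1 + c != 0 by rewrite gt_eqF.
have ht2 : t ^+ 2 = 1 - c ^+ 2 by rewrite hc2; ring.
have e1 : 1 + s ^+ 2 = 2 / (1 + c).
  by rewrite /s expr_div_n ht2; field.
have := partA hn hf0 hm hinv hs.
have -> : 2 * s / (1 + s ^+ 2) = t by rewrite e1 /s; field.
move=> ->; rewrite -/c e1 /s expr_div_n ht2; by field.
Qed.
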